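(* Fix an iteration index $k \ge 0$ and an agent index $i \in \{0,1,\dots,n\}$. Suppose the densities $p_j^{(k+1)}$ for $j<i$ and $p_j^{(k)}$ for all $j$ are given. Define $\bar{\gamma}_i^{(k)}$ and $\bar{c}_i^{(k)}$ by $$\bar{\gamma}_i^{(k)}(f) = \sum_{j=0}^{i-1} \int_{\mathcal{F}} \psi(f, g)\, p_j^{(k+1)}(g)\, dg + \sum_{j=i+1}^{n} \int_{\mathcal{F}} \psi(f, g)\, p_j^{(k)}(g)\, dg, \qquad f\in\mathcal{F},$$ $$\bar{c}_i^{(k)}(p) = \int_{\mathcal{F}} p(f)\, \bar{\gamma}_i^{(k)}(f)\, df \quad (p\in\mathcal{P}).$$ Let $$p_i^{(k+1)}(f) = \frac{p_i^{(k)}(f)\exp\big(-\bar{\gamma}_i^{(k)}(f)\big)}{\int_{\mathcal{F}} p_i^{(k)}(g)\exp\big(-\bar{\gamma}_i^{(k)}(g)\big)\, dg}.$$ If $p_i^{(k+1)} \neq p_i^{(k)}$, then there exists $\xi>0$ such that $$\bar{c}_i^{(k)}\big(p_i^{(k+1)}\big) \le \bar{c}_i^{(k)}\big(p_i^{(k)}\big) - \xi .$$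
   Context: Trajectory space: $\mathcal{F} \subseteq \mathbb{R}^{d\times T}$, where $d$ is the state dimension and $T$ is the number of time points. Distribution space: $\mathcal{P}$ is the set of probability density functions $p:\mathcal{F}\to[0,\infty)$ with $\int_{\mathcal{F}} p(f)\,df=1$. There are $n+1$ agents, indexed $0,1,\dots,n$ (index $0$ is the robot). For each iteration $k\ge 0$ and each agent $j$, $p_j^{(k)}\in\mathcal{P}$ is agent $j$'s preference density. The collision penalty function $\psi:\mathcal{F}\times\mathcal{F}\to[0,\infty)$ is symmetric, i.e. $\psi(f,g)=\psi(g,f)$. *)

(* Defs.v *)
From HB Require Import structures.
From mathcomp Require Import all_boot all_order all_algebra.
From mathcomp Require Import all_classical all_reals all_analysis.
Set Implicit Arguments. Unset Strict Implicit. Unset Printing Implicit Defensive.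
Import Order.TTheory GRing.Theory Num.Theory.
Local Open Scope ring_scope.
Local Open Scope classical_set_scope.

Section defs.
Context {R : realType} {d : measure_display} {T : measurableType d}.
Variable mu : {measure set T -> \bar R}.

Definition is_density (p : T -> R) : Prop :=
  [/\ (forall x, 0 <= p x), measurable_fun setT p &
      (\int[mu]_x (p x)%:E = 1)%E].

Variable n : nat.
(** P k j = p_j^(k), agents indexed by 'I_n.+1 = {0,...,n}. *)
Variable P : nat -> 'I_n.+1 -> T -> R.
Variable psi : T -> T -> R.

Definition gamma_bar (k : nat) (i : 'I_n.+1) (f : T) : R :=
  \sum_(j < n.+1 | (j < i)%N) Rintegral mu setT (fun g => psi f g * P k.+1 j g)
  + \sum_(j < n.+1 | (i < j)%N) Rintegral mu setT (fun g => psi f g * P k j g).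

Definition cost_bar (k : nat) (i : 'I_n.+1) (p : T -> R) : \bar R :=
  (\int[mu]_f (p f * gamma_bar k i f)%:E)%E.

Definition gibbs_update (k : nat) (i : 'I_n.+1) (f : T) : R :=
  P k i f * expR (- gamma_bar k i f) /
  Rintegral mu setT (fun g => P k i g * expR (- gamma_bar k i g)).
End defs.

(* Main.v *)
Require Import Defs.
From HB Require Import structures.
From mathcomp Require Import all_boot all_order all_algebra.
From mathcomp Require Import all_classical all_reals all_analysis.
From mathcomp Require Import measurable_realfun.
From mathcomp Require Import ring lra.
Import Order.TTheory GRing.Theory Num.Theory.
Local Open Scope ring_scope.
Local Open Scope classical_set_scope.

Section meas.
Context (R : realType) (d : measure_display) (T : measurableType d)
  (mu : {measure set T -> \bar R}).
Hypothesis smu : sigma_finite setT mu.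
Definition mu' : set T -> \bar R := mu.
HB.instance Definition _ := Measure.on mu'.
HB.instance Definition _ := Measure_isSigmaFinite.Build _ _ _ mu' smu.

Lemma meas_Rint (psi : T -> T -> R) (p : T -> R) :
  (forall f g, 0 <= psi f g) -> (forall x, 0 <= p x) ->
  measurable_fun setT (fun fg : T * T => psi fg.1 fg.2) ->
  measurable_fun setT p ->
  measurable_fun setT (fun f => Rintegral mu setT (fun g => psi f g * p g)).
Proof.
move=> psi0 p0 mpsi mp.
have h1 : measurable_fun setT (fun z : T * T => (psi z.1 z.2 * p z.2)%:E).
  apply/measurable_EFinP; apply: measurable_funM => //.
  exact: measurableT_comp.
have h2 : forall z : T * T, (0 <= (psi z.1 z.2 * p z.2)%:E)%E.
  by move=> z; rewrite lee_fin mulr_ge0.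
have mF := @measurable_fun_fubini_tonelli_F _ _ T T R mu' _ h1 h2.
have mfine : measurable_fun setT (@fine R).
  exact: measurable_realfun.fine_measurable.
exact: measurableT_comp mfine mF.
Qed.

Lemma meas_sum_filter (I : finType) (Pr : pred I) (h : I -> T -> R) :
  (forall j, measurable_fun setT (h j)) ->
  measurable_fun setT (fun x => \sum_(j | Pr j) h j x).
Proof.
move=> mh.
rewrite (_ : (fun x => _) = (fun x => \sum_(j <- index_enum I) (if Pr j then h j x else 0))); last first.
  by apply/funext => x; rewrite big_mkcond.
apply: measurable_sum => j; case: (Pr j) => //; exact: measurable_cst.
Qed.
End meas.

Section integ.
Context {R : realType} {d : measure_display} {T : measurableType d}
  {mu : {measure set T -> \bar R}}.
Implicit Types f g : T -> R.
Local Notation RI := (fun f => mu.-integrable setT (EFin \o f)).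

Lemma intR_ge0 f : measurable_fun setT f -> (forall x, 0 <= f x) ->
  (\int[mu]_x (f x)%:E < +oo)%E -> RI f.
Proof.
move=> mf f0 fi; apply/integrableP; split; first exact/measurable_EFinP.
by under eq_integral do rewrite gee0_abs ?lee_fin //.
Qed.

Lemma intR_le f g : measurable_fun setT f -> (forall x, `|f x| <= `|g x|) -> RI g -> RI f.
Proof.
move=> mf fg ig; apply: (le_integrable measurableT _ _ ig).
  exact/measurable_EFinP.
by move=> x _ /=; rewrite lee_fin.
Qed.

Lemma intRD f g : RI f -> RI g -> RI (fun x => f x + g x).
Proof.
move=> if1 ig; apply: (eq_integrable measurableT _ _ _ (integrableD measurableT if1 ig)).
by move=> x _ /=; rewrite EFinD.
Qed.

Lemma intRN f : RI f -> RI (fun x => - f x).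
Proof.
move=> if1; apply: (eq_integrable measurableT _ _ _ (integrableN if1)).
by move=> x _ /=; rewrite EFinN.
Qed.

Lemma intRB f g : RI f -> RI g -> RI (fun x => f x - g x).
Proof. by move=> if1 ig; apply: intRD => //; exact: intRN. Qed.

Lemma intRZ r f : RI f -> RI (fun x => r * f x).
Proof.
move=> if1; apply: (eq_integrable measurableT _ _ _ (integrableZl measurableT r if1)).
by move=> x _ /=; rewrite EFinM.
Qed.

Lemma intRE f : RI f -> (\int[mu]_x (f x)%:E)%E = (Rintegral mu setT f)%:E.
Proof. by move=> if1; rewrite /Rintegral fineK // (integrable_fin_num measurableT if1). Qed.
End integ.

Theorem lemma1 (R : realType) (d : measure_display) (T : measurableType d)
  (mu : {measure set T -> \bar R}) (n : nat)
  (P : nat -> 'I_n.+1 -> T -> R) (psi : T -> T -> R) (k : nat) (i : 'I_n.+1) :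
  sigma_finite setT mu ->
  (forall f g, 0 <= psi f g) ->
  (forall f g, psi f g = psi g f) ->
  measurable_fun setT (fun fg : T * T => psi fg.1 fg.2) ->
  (forall kk j, is_density mu (P kk j)) ->
  (forall f (j : 'I_n.+1), (j < i)%N ->
     mu.-integrable setT (fun g => (psi f g * P k.+1 j g)%:E)) ->
  (forall f (j : 'I_n.+1), (i < j)%N ->
     mu.-integrable setT (fun g => (psi f g * P k j g)%:E)) ->
  (forall f, P k.+1 i f = gibbs_update mu P psi k i f) ->
  ~ {ae mu, forall f, P k.+1 i f = P k i f} ->
  exists xi : R, 0 < xi /\
    (cost_bar mu P psi k i (P k.+1 i) <= cost_bar mu P psi k i (P k i) - xi%:E)%E.
Proof.
move=> smu psi0 _ mpsi dens _ _ upd nae.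
have Pge0 kk j x : 0 <= P kk j x by case: (dens kk j) => + _ _; apply.
have mP kk j : measurable_fun setT (P kk j) by case: (dens kk j).
have [p0 mp p1] := dens k i.
rewrite /gibbs_update in upd.
rewrite /cost_bar.
set p := P k i in p0 mp p1 upd nae *.
set g := gamma_bar mu P psi k i in upd *.
have g0 x : 0 <= g x.
  rewrite /g /gamma_bar; apply: addr_ge0; apply: sumr_ge0 => j _;
    apply: Rintegral_ge0 => y _; exact: mulr_ge0.
have mg : measurable_fun setT g.
  rewrite /g /gamma_bar; apply: measurable_funD; apply: meas_sum_filter => j;
    by apply: (@meas_Rint _ _ _ mu smu).
set e := fun x => expR (- g x).
have me : measurable_fun setT e.
  have mng : measurable_fun setT (\- g) := measurable_funN mg.
  exact: (measurableT_comp (@measurable_expR R) mng).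
have e0 x : 0 < e x by exact: expR_gt0.
have e1 x : e x <= 1 by rewrite /e expR_le1 oppr_le0.
have ip : mu.-integrable setT (EFin \o p).
  by apply: intR_ge0 => //; rewrite p1 ltry.
have mpe : measurable_fun setT (fun x => p x * e x) by exact: measurable_funM.
have ipe : mu.-integrable setT (EFin \o (fun x => p x * e x)).
  apply: intR_le ip => // x; rewrite !ger0_norm ?mulr_ge0 ?p0 ?(ltW (e0 x)) //.
  by rewrite ler_piMr.
set Z := Rintegral mu setT (fun x => p x * e x).
have Z0 : 0 < Z.
  have Zge : 0 <= Z by apply: Rintegral_ge0 => x _; rewrite mulr_ge0 // ltW.
  rewrite lt_neqAle Zge andbT; apply/eqP => Zeq.
  have H0 : (\int[mu]_x `|(EFin \o (fun x => p x * e x)%R) x|)%E = 0.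
    rewrite (eq_integral (EFin \o (fun x => p x * e x))); last first.
      by move=> x _; rewrite gee0_abs // lee_fin mulr_ge0 // ltW.
    by rewrite (intRE _ ipe) -/Z -Zeq.
  have mpeE : measurable_fun setT (EFin \o (fun x => p x * e x)).
    exact/measurable_EFinP.
  have := (ae_eq_integral_abs mu measurableT mpeE).1 H0.
  move=> H1.
  have H2 : ae_eq mu setT (EFin \o p) (cst 0%E).
    apply: filterS H1 => x /= h Tx; have := h Tx; move/eqP.
    by rewrite eqe mulf_eq0 (gt_eqF (e0 x)) orbF => /eqP ->.
  have mpE : measurable_fun setT (EFin \o p) by exact/measurable_EFinP.
  have := @ae_eq_integral _ _ _ mu setT (cst 0%E) (EFin \o p) measurableT mpE (measurable_cst _) H2.
  rewrite p1 integral0 => /eqP; by rewrite eqe oner_eq0.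
have upd' f : P k.+1 i f = p f * e f / Z by exact: upd.
under eq_integral do rewrite upd'.
set A := (\int[mu]_x (p x * g x)%:E)%E.
have A0 : (0 <= A)%E by apply: integral_ge0 => x _; rewrite lee_fin mulr_ge0.
have [Aoo|Afin] := eqVneq A +oo%E.
  exists 1; split => //; rewrite Aoo addye // leey //.
have Afn : A \is a fin_num by rewrite ge0_fin_numE // ltey.
set a := fine A.
have Aa : A = a%:E by rewrite fineK.
have mpg : measurable_fun setT (fun x => p x * g x) by exact: measurable_funM.
have ipg : mu.-integrable setT (EFin \o (fun x => p x * g x)).
  by apply: intR_ge0 => //; [move=> x; rewrite mulr_ge0|rewrite -/A Aa ltry].
have mpge : measurable_fun setT (fun x => p x * g x * e x) by exact: measurable_funM.
have ipge : mu.-integrable setT (EFin \o (fun x => p x * g x * e x)).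
  apply: intR_le ipg => // x; rewrite !ger0_norm ?mulr_ge0 ?p0 ?(ltW (e0 x)) //.
  by rewrite ler_piMr // mulr_ge0.
set B := Rintegral mu setT (fun x => p x * g x * e x).
set E := expR (- a).
pose h := fun x => p x * g x * e x - a * (p x * e x) - E * (p x * g x) + (a * E) * p x.
have ih : mu.-integrable setT (EFin \o h).
  apply: intRD; last exact: intRZ.
  apply: intRB; last exact: intRZ.
  by apply: intRB => //; exact: intRZ.
have Rp : Rintegral mu setT p = 1 by rewrite /Rintegral p1.
have Ra : Rintegral mu setT (fun x => p x * g x) = a by [].
have Rh : Rintegral mu setT h = B - a * Z.
  rewrite /h RintegralD //; last first.
  - exact: intRZ.
  - apply: intRB; last exact: intRZ.
    by apply: intRB => //; exact: intRZ.
  rewrite RintegralB //; [|by apply: intRB => //; exact: intRZ|exact: intRZ].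
  rewrite RintegralB //; last exact: intRZ.
  rewrite !RintegralZl // Rp Ra -/B -/Z; ring.
have hE x : h x = p x * ((g x - a) * (e x - E)) by rewrite /h; ring.
have hle x : h x <= 0.
  rewrite hE; apply: mulr_ge0_le0 => //.
  have [ga|ag] := leP (g x) a.
    apply: mulr_le0_ge0; first by rewrite subr_le0.
    by rewrite subr_ge0 /e /E ler_expR lerN2.
  apply: mulr_ge0_le0; first by rewrite subr_ge0 ltW.
  by rewrite subr_le0 /e /E ler_expR lerN2 ltW.
have mh : measurable_fun setT h.
  rewrite (_ : h = fun x => p x * ((g x - a) * (e x - E))); last exact/funext.
  apply: measurable_funM => //; apply: measurable_funM; apply: measurable_funB => //;
    exact: measurable_cst.
have mhE : measurable_fun setT (EFin \o h) by exact/measurable_EFinP.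
have Rle : Rintegral mu setT h <= 0.
  have H := @Rintegral_ge0 _ _ _ mu setT (fun x => -1 * h x).
  rewrite RintegralZl // in H.
  have : 0 <= -1 * Rintegral mu setT h by apply: H => x _; rewrite mulN1r oppr_ge0.
  by rewrite mulN1r oppr_ge0.
have hneg : Rintegral mu setT h < 0.
  rewrite lt_neqAle Rle andbT; apply/eqP => Rh0.
  have H0 : (\int[mu]_x `|(EFin \o h) x|)%E = 0.
    rewrite (eq_integral (EFin \o (fun x => -1 * h x))%R); last first.
      by move=> x _ /=; rewrite ler0_norm ?hle // mulN1r.
    by rewrite (intRE _ (intRZ (-1) _ ih)) RintegralZl // Rh0 mulr0.
  have H1 := (ae_eq_integral_abs mu measurableT mhE).1 H0.
  have H2 : ae_eq mu setT (EFin \o (fun x => p x * e x)) (EFin \o (fun x => E * p x)).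
    apply: filterS H1 => x /= hx Tx; have := hx Tx; move=> /eqP.
    rewrite eqe hE mulf_eq0 => /orP [/eqP->|]; first by rewrite !mul0r mulr0.
    rewrite mulf_eq0 => /orP[]; rewrite subr_eq0 => /eqP hx'.
    - by rewrite /e hx' mulrC.
    - by rewrite hx' mulrC.
  have mEp : measurable_fun setT (EFin \o (fun x => E * p x)).
    by apply/measurable_EFinP; apply: measurable_funM => //; exact: measurable_cst.
  have mpeE : measurable_fun setT (EFin \o (fun x => p x * e x)).
    exact/measurable_EFinP.
  have ZE : Z = E.
    have := @ae_eq_integral _ _ _ mu setT (EFin \o (fun x => E * p x))
      (EFin \o (fun x => p x * e x)) measurableT mpeE mEp H2.
    rewrite (intRE _ ipe) (intRE _ (intRZ E _ ip)) RintegralZl // Rp mulr1.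
    by move=> [].
  apply: nae; apply: filterS H2 => x /= hx.
  have := hx I; move=> [] hx'.
  have E0 : E != 0 by rewrite gt_eqF // expR_gt0.
  by rewrite upd' hx' ZE mulrC mulrA mulVf // mul1r.
exists (a - B / Z); split.
  rewrite subr_gt0 ltr_pdivrMr //.
  by rewrite -subr_lt0 -Rh.
rewrite (eq_integral (EFin \o (fun x => Z^-1 * (p x * g x * e x)))); last first.
  by move=> x _ /=; congr EFin; ring.
rewrite (intRE _ (intRZ _ _ ipge)) RintegralZl // -/B Aa -EFinB lee_fin.
rewrite mulrC; lra.
Qed.
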